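(* Let $\lambda$ be a nonzero real number and $n\ge1$ an integer. Then, as polynomials in $x$, $$\sum_{k=1}^{n}S_{2,\lambda}(n,k)\frac{x^{k}}{k}=\frac{1}{n}\sum_{j=0}^{n-1}\binom{n}{j}\beta_{j,\lambda}(1-\lambda)\,\phi_{n-j,\lambda}(x).$$ In particular, for $x=1$, $$\sum_{k=1}^{n}\frac{S_{2,\lambda}(n,k)}{k}=\frac{1}{n}\sum_{j=0}^{n-1}\binom{n}{j}\beta_{j,\lambda}(1-\lambda)\,\phi_{n-j,\lambda},$$ where $\phi_{m,\lambda}=\phi_{m,\lambda}(1)$.
   Context: For real $y$ and integer $k\ge0$: $(y)_{0,\lambda}=1$, $(y)_{k,\lambda}=y(y-\lambda)\cdots(y-(k-1)\lambda)$; $(y)_0=1$, $(y)_k=y(y-1)\cdots(y-k+1)$. The degenerate exponential is $e_\lambda^x(t)=\sum_{k\ge0}(x)_{k,\lambda}t^k/k!=(1+\lambda t)^{x/\lambda}$, $e_\lambda(t)=e^1_\lambda(t)$. The degenerate Bernoulli polynomials are defined by $\frac{t}{e_\lambda(t)-1}e_\lambda^x(t)=\sum_{n\ge0}\beta_{n,\lambda}(x)\frac{t^n}{n!}$. The degenerate Bell polynomials are defined by $e^{x(e_\lambda(t)-1)}=\sum_{n\ge0}\phi_{n,\lambda}(x)\frac{t^n}{n!}$, and the degenerate Bell numbers are $\phi_{n,\lambda}=\phi_{n,\lambda}(1)$. The degenerate Stirling numbers of the second kind are defined by $(x)_{n,\lambda}=\sum_{k=0}^{n}S_{2,\lambda}(n,k)(x)_{k}$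 ($n\ge0$). *)

(* Defs.v *)
From HB Require Import structures.
From mathcomp Require Import all_boot all_order all_algebra.
Set Implicit Arguments. Unset Strict Implicit. Unset Printing Implicit Defensive.
Import Order.TTheory GRing.Theory Num.Theory.
Local Open Scope ring_scope.

Section Defs.
Variable R : realFieldType.

Definition dfall (lam y : R) (k : nat) : R := \prod_(i < k) (y - i%:R * lam).

Definition ffall (y : R) (k : nat) : R := \prod_(i < k) (y - i%:R).

(* Formal exponential generating series: a sequence a represents
   sum_n a n * t^n / n!.  Product of such series (binomial convolution). *)
Definition egf_mul (a b : nat -> R) : nat -> R :=
  fun n => \sum_(j < n.+1) 'C(n, j)%:R * a j * b (n - j)%N.

Fixpoint egf_pow (a : nat -> R) (k : nat) : nat -> R :=
  match k with
  | O => fun n => (n == 0%N)%:R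
  | S k' => egf_mul a (egf_pow a k')
  end.

(* EGF coefficients of e_lambda(t) - 1 *)
Definition egf_edeg_m1 (lam : R) : nat -> R :=
  fun n => dfall lam 1 n - (n == 0%N)%:R.

(* Degenerate Bell polynomial phi_{n,lambda}(x), defined as the coefficient
   of t^n/n! in e^{x (e_lambda(t) - 1)} = sum_k x^k/k! (e_lambda(t)-1)^k
   (formal composition; only k <= n contribute since e_lambda(t)-1 has
   no constant term). *)
Definition dbell_poly (lam : R) (n : nat) : {poly R} :=
  \sum_(k < n.+1) (egf_pow (egf_edeg_m1 lam) k n / k`!%:R) *: 'X^k.

Definition dbell (lam : R) (n : nat) : R := (dbell_poly lam n).[1].

Definition is_dstirling2 (lam : R) (S : nat -> nat -> R) : Prop :=
  forall (n : nat) (x : R), dfall lam x n = \sum_(k < n.+1) S n k * ffall x k.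

(* beta is the family of degenerate Bernoulli polynomials:
   t/(e_lambda(t) - 1) e_lambda^x(t) = sum_n beta x n t^n/n!,
   stated as the formal power series identity
   (sum_n beta x n t^n/n!) * ((e_lambda(t) - 1)/t) = e_lambda^x(t),
   where (e_lambda(t)-1)/t = sum_m (1)_{m+1,lambda}/(m+1) t^m/m!. *)
Definition is_dbernoulli (lam : R) (beta : R -> nat -> R) : Prop :=
  forall (x : R) (n : nat),
    egf_mul (beta x) (fun m => dfall lam 1 m.+1 / m.+1%:R) n = dfall lam x n.

End Defs.

(* Main.v *)
Require Import Defs.
From HB Require Import structures.
From mathcomp Require Import all_boot all_order all_algebra ring lra zify.
Set Implicit Arguments. Unset Strict Implicit. Unset Printing Implicit Defensive.
Import Order.TTheory GRing.Theory Num.Theory.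
Local Open Scope ring_scope.

Section Aux.
Variable R : realFieldType.
Implicit Types (a b c : nat -> R).

Lemma em_ext a a' b b' n : (forall m, (m <= n)%N -> a m = a' m) ->
  (forall m, (m <= n)%N -> b m = b' m) -> egf_mul a b n = egf_mul a' b' n.
Proof.
rewrite /egf_mul => Ha Hb; apply: eq_bigr => [[j /= hj]] _.
by rewrite Ha ?Hb // leq_subr.
Qed.

Lemma em_unit b n : egf_mul (fun m => (m == 0%N)%:R) b n = b n.
Proof.
rewrite /egf_mul big_ord_recl big1 ?addr0 /=.
  by rewrite bin0 subn0 !mul1r.
by move=> i _; rewrite /= mulr0 mul0r.
Qed.

Lemma em_addl a a' b n :
  egf_mul (fun m => a m + a' m) b n = egf_mul a b n + egf_mul a' b n.
Proof. rewrite /egf_mul -big_split; apply: eq_bigr => i _ /=; ring. Qed.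

Lemma em_addr a b b' n :
  egf_mul a (fun m => b m + b' m) n = egf_mul a b n + egf_mul a b' n.
Proof. rewrite /egf_mul -big_split; apply: eq_bigr => i _ /=; ring. Qed.

Lemma em_scall (x : R) a b n :
  egf_mul (fun m => x * a m) b n = x * egf_mul a b n.
Proof. rewrite /egf_mul mulr_sumr; apply: eq_bigr => i _ /=; ring. Qed.

Lemma em_scalr (x : R) a b n :
  egf_mul a (fun m => x * b m) n = x * egf_mul a b n.
Proof. rewrite /egf_mul mulr_sumr; apply: eq_bigr => i _ /=; ring. Qed.

Definition pl a N : {poly R} := \poly_(i < N) (a i / i`!%:R).

Lemma fact_neq0 n : (n`!%:R : R) != 0.
Proof. by rewrite pnatr_eq0 -lt0n fact_gt0. Qed.

Lemma coef_plM a b N n : (n < N)%N ->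
  (pl a N * pl b N)`_n = egf_mul a b n / n`!%:R.
Proof.
move=> hn; rewrite coefM /egf_mul mulr_suml; apply: eq_bigr => [[j /= hj]] _.
rewrite !coef_poly (leq_ltn_trans (leq_subr j n) hn) (leq_ltn_trans (hj : (j <= n)%N) hn).
have hf := @bin_fact n j hj.
have e : (n`!%:R : R) = 'C(n, j)%:R * j`!%:R * (n - j)`!%:R.
  by rewrite -!natrM -mulnA hf.
rewrite e; have h1 := fact_neq0 j; have h2 := fact_neq0 (n - j).
have h3 : ('C(n, j)%:R : R) != 0.
  by rewrite pnatr_eq0 -lt0n bin_gt0.
by field; apply/and3P; split.
Qed.

Lemma em_poly a b n : egf_mul a b n = n`!%:R * (pl a n.+1 * pl b n.+1)`_n.
Proof. by rewrite coef_plM // mulrC divfK // fact_neq0. Qed.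

Lemma agree_mul (p q r : {poly R}) n :
  (forall i, (i <= n)%N -> p`_i = q`_i) -> (r * p)`_n = (r * q)`_n.
Proof.
move=> h; rewrite !coefM; apply: eq_bigr => [[j /= hj]] _.
by rewrite h // leq_subr.
Qed.

Lemma em_comm a b n : egf_mul a b n = egf_mul b a n.
Proof. by rewrite !em_poly [pl b _ * _]mulrC. Qed.

Lemma em_assoc a b c n :
  egf_mul a (egf_mul b c) n = egf_mul (egf_mul a b) c n.
Proof.
rewrite !em_poly; congr (_ * _).
rewrite (@agree_mul _ (pl b n.+1 * pl c n.+1)); last first.
  by move=> i hi; rewrite coef_plM // coef_poly ltnS hi.
rewrite [pl (egf_mul a b) _ * _]mulrC [RHS](@agree_mul (pl (egf_mul a b) n.+1) (pl a n.+1 * pl b n.+1)); last first.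
  by move=> i hi; rewrite coef_plM // coef_poly ltnS hi.
by rewrite [pl c _ * _]mulrC mulrA.
Qed.


Lemma em_T a b n : n%:R * egf_mul a b n =
  egf_mul (fun m => m%:R * a m) b n + egf_mul a (fun m => m%:R * b m) n.
Proof.
rewrite /egf_mul mulr_sumr -big_split; apply: eq_bigr => [[j /= hj]] _.
have -> : (n%:R : R) = j%:R + (n - j)%:R by rewrite -natrD subnKC.
ring.
Qed.

Lemma bump0 i : bump 0 i = i.+1.
Proof. by rewrite /bump add1n. Qed.

Lemma em_S a b n : egf_mul a b n.+1 =
  egf_mul (fun m => a m.+1) b n + egf_mul a (fun m => b m.+1) n.
Proof.
rewrite /egf_mul big_ord_recl [X in _ = _ + X]big_ord_recl /= !bin0 !subn0.
under eq_bigr do rewrite bump0.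
under [X in _ = _ + (_ + X)]eq_bigr do rewrite bump0.
have e1 : \sum_(i < n.+1) ('C(n.+1, i.+1)%:R * a i.+1 * b (n.+1 - i.+1)%N) =
  \sum_(i < n.+1) ('C(n, i)%:R * a i.+1 * b (n - i)%N) +
  \sum_(i < n) ('C(n, i.+1)%:R * a i.+1 * b (n - i.+1).+1).
  rewrite [X in _ = _ + X](_ : _ = \sum_(i < n.+1) ('C(n, i.+1)%:R * a i.+1 * b (n - i.+1).+1)); last first.
    by rewrite big_ord_recr /= bin_small // mul0r mul0r addr0.
  rewrite -big_split; apply: eq_bigr => [[i /= hi]] _.
  rewrite binS subSS natrD.
  case: (ltnP i n) => [hin|hni].
    by rewrite subnSK //; ring.
  have -> : i = n by apply/eqP; rewrite eqn_leq hni -ltnS hi.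
  by rewrite bin_small // subnn; ring.
rewrite e1; ring.
Qed.



Lemma em_L (lam : R) a b n :
  egf_mul a b n.+1 + lam * n%:R * egf_mul a b n =
  egf_mul (fun m => a m.+1 + lam * m%:R * a m) b n +
  egf_mul a (fun m => b m.+1 + lam * m%:R * b m) n.
Proof.
rewrite em_S -mulrA em_T.
rewrite (@em_ext (fun m => a m.+1 + lam * m%:R * a m) (fun m => a m.+1 + lam * (m%:R * a m)) b b); 
  [|by move=> m _; rewrite mulrA|by []].
rewrite (@em_ext a a (fun m => b m.+1 + lam * m%:R * b m) (fun m => b m.+1 + lam * (m%:R * b m)));
  [|by []|by move=> m _; rewrite mulrA].
rewrite em_addl em_addr em_scall em_scalr; ring.
Qed.

Variable lam : R.
Local Notation E := (egf_edeg_m1 lam).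
Local Notation Q k := (egf_pow (egf_edeg_m1 lam) k).

Lemma dfallS y n : dfall lam y n.+1 = dfall lam y n * (y - n%:R * lam).
Proof. by rewrite /dfall big_ord_recr. Qed.

Lemma ffallS (y : R) n : ffall y n.+1 = ffall y n * (y - n%:R).
Proof. by rewrite /ffall big_ord_recr. Qed.

Lemma dfall1S n : dfall lam 1 n.+1 = dfall lam (1 - lam) n.
Proof.
rewrite /dfall big_ord_recl /= mul0r subr0 mul1r; apply: eq_bigr => i _.
by rewrite bump0 -addn1 natrD; ring.
Qed.

Lemma E0 : E 0 = 0.
Proof. by rewrite /egf_edeg_m1 /dfall big_ord0 subrr. Qed.

Lemma ES m : E m.+1 = dfall lam 1 m.+1.
Proof. by rewrite /egf_edeg_m1 subr0. Qed.

Lemma Q0 n : Q 0 n = (n == 0%N)%:R.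
Proof. by []. Qed.

Lemma Q_small k n : (n < k)%N -> Q k n = 0.
Proof.
elim: k n => [//|k IH] n hn /=.
rewrite /egf_mul big1 // => [[j /= hj]] _.
case: j hj => [|j] hj; first by rewrite E0 mulr0 mul0r.
by rewrite IH ?mulr0 //; lia.
Qed.

Lemma LE m : E m.+1 + lam * m%:R * E m = E m + (m == 0%N)%:R.
Proof.
case: m => [|m]; first by rewrite E0 ES dfallS /dfall big_ord0 /=; ring.
by rewrite !ES dfallS /=; ring.
Qed.

Lemma LQ k n : Q k n.+1 + lam * n%:R * Q k n = k%:R * (Q k n + Q k.-1 n).
Proof.
elim: k n => [|k IH] n.
  by rewrite mul0r /=; case: n => [|n] /=; ring.
rewrite [Q k.+1 n.+1]/= [Q k.+1 n]/= em_L.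
rewrite (@em_ext _ (fun m => E m + (m == 0%N)%:R) _ (Q k)); [|by move=> m _; rewrite LE|by []].
rewrite (@em_ext E E _ (fun m => k%:R * (Q k m + Q k.-1 m))); [|by []|by move=> m _; rewrite IH].
rewrite em_addl em_unit em_scalr em_addr.
case: k IH => [|k] IH /=; first by rewrite !mul0r; ring.
by rewrite -(addn1 k.+1) natrD; ring.
Qed.

Lemma cS k n : Q k n.+1 / k`!%:R =
  (k%:R - lam * n%:R) * (Q k n / k`!%:R) + (if k is k'.+1 then Q k' n / k'`!%:R else 0).
Proof.
have h := LQ k n.
have -> : Q k n.+1 = k%:R * (Q k n + Q k.-1 n) - lam * n%:R * Q k n.
  by rewrite -h; ring.
case: k {h} => [|k] /=; first by rewrite fact0; ring.
rewrite factS natrM.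
have h1 := fact_neq0 k.
have h2 : (k.+1%:R : R) != 0 by rewrite pnatr_eq0.
have h3 : (1 + k%:R : R) != 0 by rewrite addrC natr1.
by field; rewrite h1 h3.
Qed.

Lemma expand n (x : R) :
  \sum_(k < n.+1) Q k n / k`!%:R * ffall x k = dfall lam x n.
Proof.
elim: n => [|n IH].
  by rewrite big_ord1 /ffall /dfall !big_ord0 /= fact0 divr1 mulr1.
rewrite dfallS -IH mulr_suml.
under eq_bigr do rewrite cS mulrDl.
have hz : egf_mul E (Q n) n = 0 := @Q_small n.+1 n (ltnSn n).
rewrite big_split /= big_ord_recr /= hz mul0r mulr0 mul0r addr0.
rewrite [X in _ + X = _]big_ord_recl /= mul0r add0r.
under [X in _ + X = _]eq_bigr do rewrite bump0.
rewrite -big_split /=; apply: eq_bigr => i _.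
rewrite ffallS; ring.
Qed.

Lemma ffall_big (m k : nat) : (m < k)%N -> ffall (m%:R : R) k = 0.
Proof. by move=> h; rewrite /ffall (bigD1 (Ordinal h)) //= subrr mul0r. Qed.

Lemma ffall_nz (m : nat) : ffall (m%:R : R) m != 0.
Proof.
apply/prodf_neq0 => [[i /= hi]] _.
by rewrite -natrB ?pnatr_eq0 ?subn_eq0 -?ltnNge // ltnW.
Qed.

Lemma uniq_ff n (c : nat -> R) :
  (forall x : R, \sum_(k < n.+1) c k * ffall x k = 0) ->
  forall m, (m <= n)%N -> c m = 0.
Proof.
move=> H m; elim/ltn_ind: m => m IH hm.
have := H m%:R; rewrite (bigD1 (Ordinal (hm : (m < n.+1)%N))) //= big1.
  by rewrite addr0 => /eqP; rewrite mulf_eq0 (negPf (ffall_nz m)) orbF => /eqP.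
move=> [k /= hk] hne.
have hkm : k != m by apply: contraNneq hne => e; apply/eqP/val_inj => /=.
case: (ltngtP k m) hkm => // h _.
  by rewrite IH ?mul0r //; lia.
by rewrite ffall_big ?mulr0.
Qed.

Variable beta : R -> nat -> R.
Hypothesis hB : is_dbernoulli lam beta.
Local Notation B := (beta (1 - lam)).

Lemma TE n : n%:R * E n = egf_mul B E n.
Proof.
case: n => [|m].
  by rewrite E0 mulr0 /egf_mul big_ord1 /= E0 mulr0.
rewrite ES dfall1S -(hB (1 - lam) m) /egf_mul [RHS]big_ord_recr /= subnn E0 mulr0 addr0.
rewrite mulr_sumr; apply: eq_bigr => [[j /= hj]] _.
have hs : ((m - j).+1%:R : R) != 0 by rewrite pnatr_eq0.
have hb : ('C(m.+1, j)%:R : R) = m.+1%:R * 'C(m, j)%:R / (m - j).+1%:R.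
  by rewrite -natrM (mul_bin_down m.+1 j) natrM subSn // [_ * 'C(_,_)%:R]mulrC mulfK.
rewrite subSn // ES hb.
by field; rewrite addrC natr1.
Qed.

Lemma TQ k n : n%:R * Q k n = k%:R * egf_mul B (Q k) n.
Proof.
elim: k n => [|k IH] n.
  by rewrite mul0r /=; case: n => [|n]; rewrite /= ?mulr0 ?mul0r.
rewrite [Q k.+1 n]/= em_T.
rewrite (@em_ext (fun m => m%:R * E m) (egf_mul B E) (Q k) (Q k)); [|by move=> m _; rewrite TE|by []].
rewrite (@em_ext E E (fun m => m%:R * Q k m) (fun m => k%:R * egf_mul B (Q k) m)); [|by []|by move=> m _; rewrite IH].
rewrite em_scalr -(@em_assoc B E (Q k)) (@em_assoc E B (Q k)).
rewrite (@em_ext (egf_mul E B) (egf_mul B E) (Q k) (Q k)); [|by move=> m _; rewrite em_comm|by []].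
rewrite -(@em_assoc B E (Q k)) /=.
by rewrite -(addn1 k) natrD; ring.
Qed.

Lemma sum_ext (V : nmodType) m N (G : nat -> V) : (m <= N)%N ->
  (forall k, (m < k)%N -> G k = 0) -> \sum_(k < m.+1) G k = \sum_(k < N.+1) G k.
Proof.
move=> hm hG; rewrite -!(big_mkord xpredT) (@big_cat_nat _ _ _ m.+1 0 N.+1) //=.
rewrite [X in _ = _ + X]big1_seq ?addr0 // => k /andP [_].
by rewrite mem_index_iota => /andP [hk _]; exact: hG.
Qed.

Lemma hS n S : is_dstirling2 lam S -> forall k, (k <= n)%N -> S n k = Q k n / k`!%:R.
Proof.
move=> hSt k hk; apply/eqP; rewrite -subr_eq0; apply/eqP.
apply: (@uniq_ff n (fun k => S n k - Q k n / k`!%:R)) => // x.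
under eq_bigr do rewrite mulrBl.
by rewrite sumrB -hSt expand subrr.
Qed.

Lemma key n S : (1 <= n)%N -> is_dstirling2 lam S -> forall k, (k <= n)%N ->
  S n k / k%:R = n%:R^-1 * \sum_(0 <= j < n) 'C(n, j)%:R * B j * (Q k (n - j) / k`!%:R).
Proof.
move=> hn hSt [|k] hk.
  rewrite mulr0n invr0 mulr0 big_nat big1 ?mulr0 // => j /andP [_ hj].
  by rewrite /= subn_eq0 leqNgt hj /= mulr0n mul0r mulr0.
have h := TQ k.+1 n.
have hz : egf_mul E (Q k) 0 = 0 by exact: (@Q_small k.+1 0).
rewrite /egf_mul big_ord_recr /= subnn hz mulr0 addr0 in h.
rewrite (hS hSt hk).
rewrite big_mkord.
under eq_bigr do rewrite mulrA.
rewrite -mulr_suml.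
have hn0 : (n%:R : R) != 0 by rewrite pnatr_eq0 -lt0n.
have hk0 : (k.+1%:R : R) != 0 by rewrite pnatr_eq0.
have hf := fact_neq0 k.+1.
have -> : \sum_(i < n) 'C(n, i)%:R * B i * Q k.+1 (n - i) = n%:R * Q k.+1 n / k.+1%:R.
  apply: (mulfI hk0); rewrite [RHS]mulrC divfK //; exact: (esym h).
by field; rewrite hf hn0 addrC natr1 hk0.
Qed.

Lemma main_poly n S : (1 <= n)%N -> is_dstirling2 lam S ->
  \sum_(1 <= k < n.+1) (S n k / k%:R) *: 'X^k
     = n%:R^-1 *: \sum_(0 <= j < n)
          ('C(n, j)%:R * B j) *: dbell_poly lam (n - j)%N.
Proof.
move=> hn hSt.
have -> : \sum_(1 <= k < n.+1) (S n k / k%:R) *: 'X^k =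
          \sum_(k < n.+1) (S n k / k%:R) *: ('X^k : {poly R}).
  rewrite big_add1 /= big_mkord big_ord_recl mulr0n invr0 mulr0 scale0r add0r.
  by apply: eq_bigr => i _; rewrite /= bump0.
have -> : \sum_(0 <= j < n) ('C(n, j)%:R * B j) *: dbell_poly lam (n - j)%N =
   \sum_(0 <= j < n) \sum_(k < n.+1) ('C(n, j)%:R * B j * (Q k (n - j) / k`!%:R)) *: ('X^k : {poly R}).
  apply: eq_bigr => j _; rewrite /dbell_poly scaler_sumr.
  transitivity (\sum_(k < (n-j).+1) ('C(n, j)%:R * B j * (Q k (n - j) / k`!%:R)) *: ('X^k : {poly R})).
    by apply: eq_bigr => k _; rewrite scalerA.
  apply: (@sum_ext _ (n - j) n (fun k => ('C(n, j)%:R * B j * (Q k (n - j) / k`!%:R)) *: ('X^k : {poly R}))); first exact: leq_subr.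
  by move=> k hk; rewrite Q_small // mul0r mulr0 scale0r.
rewrite exchange_big scaler_sumr; apply: eq_bigr => [[k /= hk]] _.
by rewrite -scaler_suml scalerA (key hn hSt hk).
Qed.
End Aux.

Theorem theorem12 (R : realFieldType) (lam : R) (n : nat)
    (S : nat -> nat -> R) (beta : R -> nat -> R) :
  lam != 0 -> (1 <= n)%N ->
  is_dstirling2 lam S -> is_dbernoulli lam beta ->
  (\sum_(1 <= k < n.+1) (S n k / k%:R) *: 'X^k
     = n%:R^-1 *: \sum_(0 <= j < n)
          ('C(n, j)%:R * beta (1 - lam) j) *: dbell_poly lam (n - j)%N)
  /\
  (\sum_(1 <= k < n.+1) S n k / k%:R
     = n%:R^-1 * \sum_(0 <= j < n)
          'C(n, j)%:R * beta (1 - lam) j * dbell lam (n - j)%N).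
Proof.
move=> _ hn hSt hB.
have hp := main_poly hB hn hSt.
split => //.
have := congr1 (fun p : {poly R} => p.[1]) hp.
rewrite /= hornerZ !horner_sum.
rewrite (eq_bigr (fun i => S n i / i%:R)); last by move=> i _; rewrite hornerZ hornerXn expr1n mulr1.
rewrite [X in _ = _ * X -> _](eq_bigr (fun i => 'C(n, i)%:R * beta (1 - lam) i * dbell lam (n - i))) //.
by move=> i _; rewrite hornerZ.
Qed.
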